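(* Suppose $L=cW$ with $c\in\mathbb{C}\setminus\{0\}$ and $W\in\mathbb{C}^{p\times p}$ unitary. Let $\mathcal A\in\mathbb{C}_p^{I_1\times\cdots\times I_N}$. For each $n$ let $\mathcal A_{(n)}=\mathcal U_n*\Sigma_n*\mathcal V_n^H$ be the t-SVD of the mode-$n$ unfolding, let $R_n$ be the t-rank of $\mathcal A_{(n)}$, let $\sigma^{(n)}_i=\|\Sigma_n(i,i)\|$ (Frobenius norm of the $i$-th diagonal tubal scalar), and fix integers $1\le I_n'\le I_n$. Let $\overline{\mathcal U}_n\in\mathbb{C}_p^{I_n\times I_n'}$ consist of the first $I_n'$ columns of $\mathcal U_n$, and define the truncated Hot-SVD approximation $$\widehat{\mathcal A}=\widetilde{\mathcal S}*_1\overline{\mathcal U}_1\cdots*_N\overline{\mathcal U}_N,\qquad \widetilde{\mathcal S}=\mathcal A*_1\overline{\mathcal U}_1^H\cdots*_N\overline{\mathcal U}_N^H\in\mathbb{C}_p^{I_1'\times\cdots\times I_N'}.$$ Then $$\|\mathcal A-\widehat{\mathcal A}\|\le\sqrt{\sum_{n=1}^N\sum_{i=I_n'+1}^{R_n}(\sigma^{(n)}_i)^2}\le\sqrt N\,\big\|\mathcal A-\mathcal S*_1\mathcal W_1\cdots*_N\mathcal W_N\big\|$$ for every $\mathcal S\in\mathbb{C}_p^{I_1'\times\cdots\times I_N'}$ and all $\mathcal W_n\in\mathbb{C}_p^{I_n\times I_n'}$ with $\mathcal W_n^H*\mathcal W_n=\mathcal I_{I_n'}$ (empty sums are $0$). In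 particular the bound holds with $\sqrt N\|\mathcal A-\mathcal A^*\|$, where $\mathcal A^*$ is an optimal solution of this orthogonal low-tubal-rank approximation problem.
   Context: Fix an integer $p\ge1$ and an invertible linear map $L:\mathbb{C}^p\to\mathbb{C}^p$. A tubal scalar is an element of $\mathbb{C}_p:=\mathbb{C}^p$. The tensor-tensor product of tubal scalars is $\mathbf a*\mathbf b=L^{-1}(L(\mathbf a)\odot L(\mathbf b))$, where $\odot$ is the componentwise product. A tubal matrix $\mathcal A\in\mathbb{C}_p^{I\times J}$ is an $I\times J$ array of tubal scalars; its $k$-th frontal slice $\mathcal A^{(k)}$ has entries $\mathcal A(i,j)^{(k)}$, and $L(\mathcal A)$ is obtained by applying $L$ to every entry. $(\mathcal A*\mathcal B)(i,k)=\sum_j\mathcal A(i,j)*\mathcal B(j,k)$; equivalently $L(\mathcal A*\mathcal B)^{(k)}=L(\mathcal A)^{(k)}L(\mathcal B)^{(k)}$. The identity $\mathcal I_I$ has $L(\mathcal I_I)^{(k)}$ equal to the $I\times I$ identity matrix for all $k$. The Hermitian transpose is defined by $L(\mathcal A^H)^{(k)}=(L(\mathcal A)^{(k)})^H$; $\mathcal A\in\mathbb{C}_p^{I\times I}$ is unitary if $\mathcal A*\mathcal A^H=\mathcal A^H*\mathcal A=\mathcal I_I$. A t-SVD of $\mathcal A\in\mathbb{C}_p^{I\times J}$ is the factorization $\mathcal A=\mathcal U*\Sigma*\mathcal V^H$ obtained by taking, for each $k$, a matrix SVD $L(\mathcal A)^{(k)}=U_kS_kV_k^H$ (with $U_k,V_k$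 unitary, $S_k$ rectangular diagonal with singular values in nonincreasing order) and defining $L(\mathcal U)^{(k)}=U_k$, $L(\Sigma)^{(k)}=S_k$, $L(\mathcal V)^{(k)}=V_k$. The t-rank is the number of nonzero tubal scalars $\Sigma(i,i)$. A tubal tensor $\mathcal A\in\mathbb{C}_p^{I_1\times\cdots\times I_N}$ is an $N$-way array of tubal scalars; its mode-$n$ unfolding $\mathcal A_{(n)}\in\mathbb{C}_p^{I_n\times\prod_{m\neq n}I_m}$ has $\mathcal A_{(n)}(i_n,j)=\mathcal A(i_1,\dots,i_N)$ with $j=1+\sum_{k\neq n}(i_k-1)\prod_{m<k,\,m\neq n}I_m$. The $n$-mode product is $(\mathcal A*_n\mathcal U)(i_1,\dots,i_{n-1},j,i_{n+1},\dots,i_N)=\sum_{i_n}\mathcal A(i_1,\dots,i_N)*\mathcal U(j,i_n)$; repeated products are evaluated left to right. $\|\cdot\|$ is the Frobenius norm (Euclidean norm of all complex entries of the underlying array). *)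

(* Defs.v *)
(* Complex numbers are modelled by an arbitrary
   numClosedFieldType C (e.g. R[i] for a real closed / real field R). *)
From HB Require Import structures.
From mathcomp Require Import all_boot all_order all_algebra.
Set Implicit Arguments. Unset Strict Implicit. Unset Printing Implicit Defensive.
Import Order.TTheory GRing.Theory Num.Theory.
Local Open Scope ring_scope.

Section TubalDefs.
Variable C : numClosedFieldType.
Variable p : nat.

Definition tube := 'rV[C]_p.

Definition mxH m n (A : 'M[C]_(m, n)) : 'M[C]_(n, m) := (map_mx Num.conj A)^T.

Definition unitary_mx n (W : 'M[C]_n) : Prop :=
  W *m mxH W = 1%:M /\ mxH W *m W = 1%:M.

(* The linear map L : C^p -> C^p is a |-> a *m M (row-vector convention),
   its inverse is b |-> b *m invmx M (M invertible). *)
Definition Lap (M : 'M[C]_p) (a : tube) : tube := a *m M.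
Definition Linv (M : 'M[C]_p) (b : tube) : tube := b *m invmx M.

Definition tsmul (M : 'M[C]_p) (a b : tube) : tube :=
  Linv M (\row_k (Lap M a 0 k * Lap M b 0 k)).

Definition mxe T (d : T) m n (A : 'M[T]_(m, n)) (i j : nat) : T :=
  match (insub i : option 'I_m), (insub j : option 'I_n) with
  | Some i', Some j' => A i' j'
  | _, _ => d
  end.

Definition tmul (M : 'M[C]_p) m n r (A : 'M[tube]_(m, n)) (B : 'M[tube]_(n, r))
  : 'M[tube]_(m, r) :=
  \matrix_(i, k) \sum_j tsmul M (A i j) (B j k).

Definition slice (M : 'M[C]_p) m n (A : 'M[tube]_(m, n)) (k : 'I_p) : 'M[C]_(m, n) :=
  \matrix_(i, j) Lap M (A i j) 0 k.

(* Hermitian transpose: L(A^H)^(k) = (L(A)^(k))^H *)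
Definition tH (M : 'M[C]_p) m n (A : 'M[tube]_(m, n)) : 'M[tube]_(n, m) :=
  \matrix_(i, j) Linv M (map_mx Num.conj (Lap M (A j i))).

(* identity tubal matrix: L(I)^(k) = 1 for every k *)
Definition tI (M : 'M[C]_p) n : 'M[tube]_n :=
  \matrix_(i, j) (if i == j then Linv M (const_mx 1) else 0).

Definition svd_diag m n (S : 'M[C]_(m, n)) : Prop :=
  (forall (i : 'I_m) (j : 'I_n), (i : nat) != j -> S i j = 0) /\
  (forall i : nat, (i < minn m n)%N -> 0 <= mxe 0 S i i) /\
  (forall i i' : nat, (i <= i')%N -> (i' < minn m n)%N -> mxe 0 S i' i' <= mxe 0 S i i).

Definition is_tSVD (M : 'M[C]_p) m n (A : 'M[tube]_(m, n))
  (U : 'M[tube]_m) (Sg : 'M[tube]_(m, n)) (V : 'M[tube]_n) : Prop :=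
  forall k : 'I_p,
    unitary_mx (slice M U k) /\ unitary_mx (slice M V k) /\
    svd_diag (slice M Sg k) /\
    slice M A k = slice M U k *m slice M Sg k *m mxH (slice M V k).

Definition tsnorm (a : tube) : C := sqrtC (\sum_k `|a 0 k| ^+ 2).

Definition trank m n (Sg : 'M[tube]_(m, n)) : nat :=
  \sum_(i < minn m n) nat_of_bool (mxe (0%R : tube) Sg i i != 0%R).

(* sigma_i (0-based index i) *)
Definition tsigma m n (Sg : 'M[tube]_(m, n)) (i : nat) : C := tsnorm (mxe (0%R : tube) Sg i i).

Variable N : nat.

(* Tubal tensors: functions of multi-indices (i_k)_k in nat (0-based);
   a tensor of dims I is determined by its values on i_k < I k. *)
Definition tensor := ('I_N -> nat) -> tube.

Definition tnorm (I : 'I_N -> nat) (A : tensor) : C :=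
  sqrtC (\sum_(x : {dffun forall k : 'I_N, 'I_(I k)})
           \sum_k `|A (fun k => nat_of_ord (x k)) 0 k| ^+ 2).

Definition ucols (I : 'I_N -> nat) (n : 'I_N) : nat := (\prod_(m < N | m != n) I m)%N.
Definition ustride (I : 'I_N -> nat) (n k : 'I_N) : nat :=
  (\prod_(m < N | (m < k)%N && (m != n)) I m)%N.

(* mode-n unfolding (0-based version of j = 1 + sum_{k<>n} (i_k-1) prod_{m<k,m<>n} I_m) *)
Definition unfold (I : 'I_N -> nat) (A : tensor) (n : 'I_N) : 'M[tube]_(I n, ucols I n) :=
  \matrix_(i, j) A (fun k => if k == n then (i : nat) else ((j %/ ustride I n k) %% I k)%N).

Definition tmode (M : 'M[C]_p) (A : tensor) (n : 'I_N) J K (U : 'M[tube]_(J, K)) : tensor :=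
  fun r => \sum_(t < K) tsmul M (A (fun k => if k == n then (t : nat) else r k))
                                 (mxe (0%R : tube) U (r n) t).

Definition tmodes (M : 'M[C]_p) (A : tensor) (a b : 'I_N -> nat)
  (U : forall n : 'I_N, 'M[tube]_(a n, b n)) : tensor :=
  foldl (fun X n => tmode M X n (U n)) A (enum 'I_N).

Definition firstcols m n K (U : 'M[tube]_(m, n)) : 'M[tube]_(m, K) :=
  \matrix_(i, j) mxe (0%R : tube) U i j.

End TubalDefs.

(* Main.v *)
Require Import Defs.
From HB Require Import structures.
From mathcomp Require Import all_boot all_order all_algebra.
From Stdlib Require Import FunctionalExtensionality.
Import Order.TTheory GRing.Theory Num.Theory.
Local Open Scope ring_scope.
From mathcomp Require Import zify ring.
Set Implicit Arguments. Unset Strict Implicit. Unset Printing Implicit Defensive.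

Section Mx.
Variable C : numClosedFieldType.
Local Notation mxH := (@mxH C).

Lemma mxH_mul m n r (A : 'M[C]_(m, n)) (B : 'M[C]_(n, r)) :
  mxH (A *m B) = mxH B *m mxH A.
Proof. by rewrite /Defs.mxH map_mxM trmx_mul. Qed.

Lemma mxHD m n (A B : 'M[C]_(m, n)) : mxH (A + B) = mxH A + mxH B.
Proof. by rewrite /Defs.mxH map_mxD raddfD. Qed.

Lemma mxHN m n (A : 'M[C]_(m, n)) : mxH (- A) = - mxH A.
Proof. by rewrite /Defs.mxH map_mxN raddfN. Qed.

Lemma mxHB m n (A B : 'M[C]_(m, n)) : mxH (A - B) = mxH A - mxH B.
Proof. by rewrite mxHD mxHN. Qed.

Lemma mxH1 n : mxH (1%:M : 'M[C]_n) = 1%:M.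
Proof. by rewrite /Defs.mxH map_mx1 trmx1. Qed.

Lemma mxHK m n (A : 'M[C]_(m, n)) : mxH (mxH A) = A.
Proof. by apply/matrixP=> i j; rewrite !mxE conjCK. Qed.

Lemma mxHE m n (A : 'M[C]_(m, n)) i j : mxH A i j = (A j i)^*.
Proof. by rewrite !mxE. Qed.

Definition mF m n (X : 'M[C]_(m, n)) := \sum_i \sum_j `|X i j| ^+ 2.

Lemma mF_tr m n (X : 'M[C]_(m, n)) : mF X = \tr (X *m mxH X).
Proof.
rewrite /mF /mxtrace; apply: eq_bigr => i _; rewrite mxE.
by apply: eq_bigr => j _; rewrite mxHE normCK.
Qed.

Lemma mF_ge0 m n (X : 'M[C]_(m, n)) : 0 <= mF X.
Proof. by apply: sumr_ge0 => i _; apply: sumr_ge0 => j _; apply: exprn_ge0. Qed.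

Definition herm_idem n (P : 'M[C]_n) := mxH P = P /\ P *m P = P.

Lemma mF_orth m n (P : 'M[C]_m) (A B : 'M[C]_(m, n)) : herm_idem P ->
  mF ((1%:M - P) *m A + P *m B) = mF ((1%:M - P) *m A) + mF (P *m B).
Proof.
move=> [hH hI].
have h0 : P *m (1%:M - P) = 0 by rewrite mulmxBr mulmx1 hI subrr.
have h0' : (1%:M - P) *m P = 0 by rewrite mulmxBl mul1mx hI subrr.
rewrite !mF_tr mxHD mulmxDl !mulmxDr !mxtraceD.
rewrite !mxH_mul hH mxHB mxH1 hH.
have -> : \tr ((1%:M - P) *m A *m (mxH B *m P)) = 0.
  by rewrite mxtrace_mulC mulmxA -(mulmxA _ P) h0 mulmx0 mul0mx linear0.
have -> : \tr (P *m B *m (mxH A *m (1%:M - P))) = 0.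
  by rewrite mxtrace_mulC mulmxA -(mulmxA _ (1%:M - P)) h0' mulmx0 mul0mx linear0.
by rewrite addr0 add0r.
Qed.

Lemma mF_split m n (P : 'M[C]_m) (A : 'M[C]_(m, n)) : herm_idem P ->
  mF A = mF ((1%:M - P) *m A) + mF (P *m A).
Proof.
move=> hP; rewrite -mF_orth //; congr mF.
by rewrite mulmxBl mul1mx subrK.
Qed.

Lemma mF_proj_le m n (P : 'M[C]_m) (A : 'M[C]_(m, n)) : herm_idem P ->
  mF (P *m A) <= mF A.
Proof. by move=> hP; rewrite (mF_split A hP) lerDr mF_ge0. Qed.

End Mx.

Section Mx2.
Variable C : numClosedFieldType.
Local Notation mxH := (@mxH C).
Local Notation mF := (@mF C).

Definition dS m n (S : 'M[C]_(m, n)) (i : 'I_m) := \sum_j `|S i j| ^+ 2.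

Definition sdiag m n (S : 'M[C]_(m, n)) :=
  forall (i : 'I_m) (j : 'I_n), (i : nat) != j -> S i j = 0.

Lemma tr_diag m n (G : 'M[C]_m) (S : 'M[C]_(m, n)) : sdiag S ->
  \tr (G *m (S *m mxH S)) = \sum_i G i i * dS S i.
Proof.
move=> hS; apply: eq_bigr => i _; rewrite mxE (bigD1 i) //= big1 ?addr0.
  rewrite mxE; congr (_ * _); apply: eq_bigr => j _; by rewrite mxHE normCK.
move=> j hji; rewrite mxE big1 ?mulr0 // => l _; rewrite mxHE.
case: (eqVneq (j : nat) l) => hjl.
  have hil : (i : nat) != l by rewrite -hjl eq_sym.
  by rewrite (hS i l hil) conjC0 mulr0.
by rewrite (hS j l hjl) mul0r.
Qed.

Lemma mF_svd m n r (U : 'M[C]_m) (S : 'M[C]_(m, n)) (V : 'M[C]_n) (Q : 'M[C]_(r, m)) :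
  unitary_mx U -> unitary_mx V -> sdiag S ->
  mF (Q *m (U *m S *m mxH V)) = \sum_i (mxH U *m mxH Q *m Q *m U) i i * dS S i.
Proof.
move=> hU [hV1 hV2] hS; rewrite mF_tr !mxH_mul mxHK.
have -> : Q *m (U *m S *m mxH V) *m (V *m (mxH S *m mxH U) *m mxH Q)
   = (Q *m U) *m (S *m mxH S) *m (mxH U *m mxH Q).
  by rewrite !mulmxA -(mulmxA _ (mxH V)) hV2 mulmx1.
rewrite mxtrace_mulC -tr_diag //; congr (\tr _).
by rewrite !mulmxA.
Qed.

End Mx2.

Lemma count_lt (m r : nat) : (\sum_(i < m) ((i < r)%N : nat))%N = minn r m.
Proof.
elim: m => [|m IH]; first by rewrite big_ord0; lia.
rewrite big_ord_recr /= IH; case: ltnP => h /=; lia.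
Qed.

Section KF.
Variable C : numClosedFieldType.

Lemma count_ltC m r : (r <= m)%N -> \sum_(i < m) ((i < r)%N%:R : C) = r%:R.
Proof. by move=> h; rewrite -natr_sum count_lt; congr (_%:R); lia. Qed.

Lemma kyfan m (d w : 'I_m -> C) (r : nat) : (0 < r <= m)%N ->
  (forall i j : 'I_m, (i <= j)%N -> d j <= d i) ->
  (forall i, 0 <= w i <= 1) -> \sum_(i < m) w i = r%:R ->
  \sum_(i < m) w i * d i <= \sum_(i < m) (i < r)%N%:R * d i.
Proof.
move=> /andP [r0 rm] hd hw hs.
have hr : (r.-1 < m)%N by lia.
pose c := d (Ordinal hr).
rewrite -subr_le0 -sumrB.
have -> : \sum_(i < m) (w i * d i - (i < r)%N%:R * d i)
   = \sum_(i < m) (w i - (i < r)%N%:R) * (d i - c) + c * \sum_(i < m) (w i - (i < r)%N%:R).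
  rewrite mulr_sumr -big_split /=; apply: eq_bigr => i _; ring.
rewrite sumrB hs count_ltC // subrr mulr0 addr0.
apply: sumr_le0 => i _; have /andP [w0 w1] := hw i.
case: (ltnP i r) => hi /=.
  apply: mulr_le0_ge0; first by rewrite subr_le0.
  by rewrite subr_ge0; apply: hd => /=; lia.
apply: mulr_ge0_le0; first by rewrite subr0.
by rewrite subr_le0; apply: hd => /=; lia.
Qed.
End KF.

Section Mx3.
Variable C : numClosedFieldType.
Local Notation mxH := (@mxH C).
Local Notation mF := (@mF C).

Lemma diagHH_ge0 r m (Z : 'M[C]_(r, m)) i : 0 <= (mxH Z *m Z) i i.
Proof.
rewrite mxE; apply: sumr_ge0 => j _; rewrite mxHE -normCKC; exact: exprn_ge0.
Qed.

Lemma mF_compl m n (U : 'M[C]_m) (S : 'M[C]_(m, n)) (V : 'M[C]_n) (P : 'M[C]_m) :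
  unitary_mx U -> unitary_mx V -> sdiag S -> herm_idem P ->
  mF ((1%:M - P) *m (U *m S *m mxH V)) =
  \sum_(i < m) (1 - (mxH U *m P *m U) i i) * dS S i.
Proof.
move=> hU hV hS hP.
have e := mF_split (U *m S *m mxH V) hP.
have -> : mF ((1%:M - P) *m (U *m S *m mxH V)) =
  mF (U *m S *m mxH V) - mF (P *m (U *m S *m mxH V)) by rewrite e addrK.
rewrite -{1}[U *m S *m mxH V]mul1mx !mF_svd // mxH1 mulmx1 mulmx1.
case: hU => _ ->; case: hP => hH hI; rewrite hH -(mulmxA _ P P) hI.
rewrite -sumrB; apply: eq_bigr => i _; rewrite mxE eqxx /=; ring.
Qed.

Lemma proj_of m r (Y : 'M[C]_(m, r)) : mxH Y *m Y = 1%:M -> herm_idem (Y *m mxH Y).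
Proof.
move=> h; split; first by rewrite mxH_mul mxHK.
by rewrite mulmxA -(mulmxA Y) h mulmx1.
Qed.

Lemma proj_kill m r (Y : 'M[C]_(m, r)) : mxH Y *m Y = 1%:M ->
  (1%:M - Y *m mxH Y) *m Y = 0.
Proof. by move=> h; rewrite mulmxBl mul1mx -mulmxA h mulmx1 subrr. Qed.

Definition dmono m n (S : 'M[C]_(m, n)) :=
  forall i j : 'I_m, (i <= j)%N -> dS S j <= dS S i.

Lemma dS_ge0 m n (S : 'M[C]_(m, n)) i : 0 <= dS S i.
Proof. by apply: sumr_ge0 => j _; apply: exprn_ge0. Qed.

Lemma R1 m n r (U : 'M[C]_m) (S : 'M[C]_(m, n)) (V : 'M[C]_n) (Y : 'M[C]_(m, r)) :
  unitary_mx U -> unitary_mx V -> sdiag S -> dmono S -> (0 < r <= m)%N ->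
  mxH Y *m Y = 1%:M ->
  \sum_(i < m) (r <= i)%N%:R * dS S i <=
  mF ((1%:M - Y *m mxH Y) *m (U *m S *m mxH V)).
Proof.
move=> hU hV hS hd hr hY; have hP := proj_of hY.
rewrite mF_compl //.
pose G := mxH U *m (Y *m mxH Y) *m U.
have hG : G = mxH (mxH Y *m U) *m (mxH Y *m U) by rewrite /G mxH_mul mxHK !mulmxA.
have hG' : 1%:M - G = mxH ((1%:M - Y *m mxH Y) *m U) *m ((1%:M - Y *m mxH Y) *m U).
  rewrite mxH_mul; case: hP => hH hI.
  rewrite mxHB mxH1 hH.
  have e2 : (1%:M - Y *m mxH Y) *m (1%:M - Y *m mxH Y) = 1%:M - Y *m mxH Y.
    by rewrite mulmxBl mul1mx mulmxBr mulmx1 hI subrr subr0.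
  transitivity (mxH U *m ((1%:M - Y *m mxH Y) *m (1%:M - Y *m mxH Y)) *m U);
    last by rewrite !mulmxA.
  case: hU => _ hU2.
  by rewrite e2 mulmxBr mulmx1 mulmxBl hU2 /G.
have hw : forall i, 0 <= G i i <= 1.
  move=> i; apply/andP; split; first by rewrite hG diagHH_ge0.
  have := diagHH_ge0 ((1%:M - Y *m mxH Y) *m U) i.
  by rewrite -hG' !mxE eqxx /= subr_ge0.
have hs : \sum_(i < m) G i i = r%:R.
  rewrite hG; change (\tr (mxH (mxH Y *m U) *m (mxH Y *m U)) = r%:R).
  rewrite mxtrace_mulC mxH_mul mxHK mulmxA -(mulmxA _ U).
  by case: hU => h1 _; rewrite h1 mulmx1 hY mxtrace1.
have kf := @kyfan C m (fun i => dS S i) (fun i => G i i) r hr hd hw hs.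
rewrite -subr_ge0 -sumrB.
have -> : \sum_(i < m) ((1 - G i i) * dS S i - (r <= i)%N%:R * dS S i)
  = \sum_(i < m) (i < r)%N%:R * dS S i - \sum_(i < m) G i i * dS S i.
  rewrite -sumrB; apply: eq_bigr => i _; case: ltnP => /= _; ring.
by rewrite subr_ge0.
Qed.

End Mx3.

Section Mx4.
Variable C : numClosedFieldType.
Local Notation mxH := (@mxH C).
Local Notation mF := (@mF C).

Definition Emx m r : 'M[C]_(m, r) := \matrix_(i, j) ((i : nat) == j)%:R.

Lemma EmxHE m r (hr : (r <= m)%N) : mxH (Emx m r) *m Emx m r = 1%:M.
Proof.
apply/matrixP => a b; rewrite !mxE.
have ha : (a < m)%N by apply: leq_trans (ltn_ord a) hr.
rewrite (bigD1 (Ordinal ha)) //= big1 ?addr0.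
  by rewrite !mxE /= eqxx conjC1 mul1r.
move=> t ht; rewrite !mxE.
have -> : ((t : nat) == a) = false.
  by apply/negbTE; apply: contra ht => /eqP h; apply/eqP/val_inj.
by rewrite conjC0 mul0r.
Qed.

Lemma EEH_diag m r (i : 'I_m) : (Emx m r *m mxH (Emx m r)) i i = (i < r)%N%:R.
Proof.
rewrite mxE; case: (ltnP i r) => hi.
  rewrite (bigD1 (Ordinal hi)) //= big1 ?addr0.
    by rewrite !mxE /= eqxx conjC1 mul1r.
  move=> t ht; rewrite !mxE.
  have -> : ((i : nat) == t) = false.
    by apply/negbTE; apply: contra ht => /eqP h; apply/eqP/val_inj.
  by rewrite mul0r.
rewrite big1 // => t _; rewrite !mxE.
have -> : ((i : nat) == t) = false by apply/negbTE; rewrite neq_ltn (leq_trans (ltn_ord t) hi) orbT.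
by rewrite mul0r.
Qed.

Lemma R2 m n r (U : 'M[C]_m) (S : 'M[C]_(m, n)) (V : 'M[C]_n) :
  unitary_mx U -> unitary_mx V -> sdiag S -> (r <= m)%N ->
  mF ((1%:M - (U *m Emx m r) *m mxH (U *m Emx m r)) *m (U *m S *m mxH V)) =
  \sum_(i < m) (r <= i)%N%:R * dS S i.
Proof.
move=> hU hV hS hr.
have hY : mxH (U *m Emx m r) *m (U *m Emx m r) = 1%:M.
  rewrite mxH_mul mulmxA -(mulmxA _ (mxH U)); case: hU => _ ->.
  by rewrite mulmx1 EmxHE.
rewrite mF_compl //; last exact: proj_of.
apply: eq_bigr => i _; congr (_ * _).
have -> : mxH U *m (U *m Emx m r *m mxH (U *m Emx m r)) *m U
   = Emx m r *m mxH (Emx m r).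
  case: hU => h1 h2.
  rewrite mxH_mul !mulmxA h2 mul1mx -mulmxA h2 mulmx1 //.
rewrite EEH_diag; case: ltnP => _ /=; ring.
Qed.

End Mx4.

Lemma modn_mul2 j a b : (j %% (a * b) = (j %/ b %% a) * b + j %% b)%N.
Proof.
rewrite modn_divl.
have -> : (j %% b = (j %% (a * b)) %% b)%N.
  by rewrite (modn_dvdm j (dvdn_mull a (dvdnn b))).
exact: divn_eq.
Qed.

Section Box.
Variable N : nat.
Variable I : 'I_N -> nat.
Variable n : 'I_N.

Definition SK (K : nat) := (\prod_(m < N | (m < K)%N && (m != n)) I m)%N.

Lemma radix K j : (K <= N)%N ->
  (j %% SK K = \sum_(k < N | (k < K)%N && (k != n)) (j %/ ustride I n k %% I k) * ustride I n k)%N.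
Proof.
elim: K => [|K IH] hK.
  rewrite /SK !big_pred0 ?modn1 // => m.
have hKN : (K < N)%N by [].
have {}IH := IH (ltnW hK).
pose kK : 'I_N := Ordinal hKN.
case: (eqVneq kK n) => hkn.
  have ep : forall m : 'I_N, ((m < K.+1)%N && (m != n)) = ((m < K)%N && (m != n)).
    move=> m; rewrite ltnS leq_eqVlt; case: (eqVneq (m : nat) K) => hm //=.
    have -> : m = n by rewrite -hkn; apply: val_inj.
    by rewrite eqxx !andbF.
  by rewrite /SK (eq_bigl _ _ ep) (eq_bigl _ _ ep) -IH.
have ep : forall m : 'I_N, ((m < K.+1)%N && (m != n) && (m != kK)) = ((m < K)%N && (m != n)).
  move=> m; rewrite ltnS leq_eqVlt; case: (eqVneq (m : nat) K) => hm /=.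
    have -> : m = kK by apply: val_inj.
    by rewrite eqxx !andbF ltnn.
  have -> : (m != kK) by apply: contra_neq hm => ->.
  by rewrite !andbT.
have hin : (kK < K.+1)%N && (kK != n) by rewrite /= ltnS leqnn hkn.
rewrite /SK (bigD1 kK hin) (eq_bigl _ _ ep) /= (bigD1 kK hin) (eq_bigl _ _ ep) /=.
rewrite -/(SK K) modn_mul2 IH addnC.
by [].
Qed.

Lemma SKN : SK N = ucols I n.
Proof. by apply: eq_bigl => m; rewrite ltn_ord. Qed.

Lemma radix_full j : (j < ucols I n)%N ->
  j = (\sum_(k < N | k != n) (j %/ ustride I n k %% I k) * ustride I n k)%N.
Proof.
move=> hj; rewrite -{1}(modn_small hj) -SKN radix //.
by apply: eq_bigl => m; rewrite ltn_ord.
Qed.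

Definition dec (i j : nat) : 'I_N -> nat :=
  fun k => if k == n then i else (j %/ ustride I n k %% I k)%N.

Hypothesis Ipos : forall k, (0 < I k)%N.

Lemma dec_lt (i : 'I_(I n)) j k : (dec i j k < I k)%N.
Proof.
rewrite /dec; case: eqP => [-> | _]; first exact: ltn_ord.
by rewrite ltn_pmod.
Qed.

Definition boxT := {dffun forall k : 'I_N, 'I_(I k)}.

Definition hbox (p : 'I_(I n) * 'I_(ucols I n)) : boxT :=
  [ffun k => Ordinal (dec_lt p.1 p.2 k)].

Lemma hboxE p : (fun k => nat_of_ord (hbox p k)) = dec p.1 p.2.
Proof. by apply: functional_extensionality => k; rewrite ffunE. Qed.

Lemma hbox_inj : injective hbox.
Proof.
move=> [i j] [i' j'] /(congr1 (fun x : boxT => fun k => nat_of_ord (x k))).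
rewrite !hboxE /= => e.
have ei : (i : nat) = i' by have := congr1 (fun f => f n) e; rewrite /dec eqxx.
have ej : (j : nat) = j'.
  rewrite (radix_full (ltn_ord j)) (radix_full (ltn_ord j')).
  apply: eq_bigr => k hk; have := congr1 (fun f => f k) e.
  by rewrite /dec (negbTE hk) => ->.
by congr pair; apply: val_inj.
Qed.

Lemma foldr_prod (T : Type) (s : seq T) (g : T -> nat) :
  foldr muln 1%N [seq g x | x <- s] = (\prod_(x <- s) g x)%N.
Proof. by elim: s => [|x s IH]; rewrite ?big_nil ?big_cons //= IH. Qed.

Lemma card_box : #|boxT| = (I n * ucols I n)%N.
Proof.
rewrite card_dep_ffun foldr_prod enumT.
rewrite (bigD1 n) //= card_ord; congr (_ * _)%N.
by apply: eq_bigr => i _; rewrite card_ord.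
Qed.
End Box.

Section Snorm.
Variable C : numClosedFieldType.
Variable N : nat.
Local Notation st := (('I_N -> nat) -> C).

Definition snorm2 (I : 'I_N -> nat) (a : st) : C :=
  \sum_(x : {dffun forall k : 'I_N, 'I_(I k)}) `|a (fun k => nat_of_ord (x k))| ^+ 2.

Definition sunfold (I : 'I_N -> nat) (a : st) (n : 'I_N) : 'M[C]_(I n, ucols I n) :=
  \matrix_(i, j) a (dec I n i j).

Lemma snorm2_unfold I (Ipos : forall k, (0 < I k)%N) (a : st) n :
  snorm2 I a = mF (sunfold I a n).
Proof.
have hb : bijective (hbox Ipos (n := n)).
  apply: inj_card_bij; first exact: hbox_inj.
  by rewrite (@card_box N I n) card_prod !card_ord.
rewrite /snorm2 (reindex _ (onW_bij _ hb)) /mF pair_big /=.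
by apply: eq_bigr => -[i j] _; rewrite hboxE mxE.
Qed.

Definition upd (r : 'I_N -> nat) (n : 'I_N) (t : nat) : 'I_N -> nat :=
  fun k => if k == n then t else r k.

Definition smode (a : st) (n : 'I_N) J K (Q : 'M[C]_(J, K)) : st :=
  fun r => \sum_(t < K) a (upd r n t) * mxe 0 Q (r n) t.

Lemma mxeE T (d : T) m n (A : 'M[T]_(m, n)) (i : 'I_m) (j : 'I_n) : mxe d A i j = A i j.
Proof. by rewrite /mxe !valK. Qed.

Lemma mxe_out T (d : T) m n (A : 'M[T]_(m, n)) (i j : nat) : (m <= i)%N -> mxe d A i j = d.
Proof. by move=> h; rewrite /mxe insubN // -leqNgt. Qed.

Lemma mxe_out2 T (d : T) m n (A : 'M[T]_(m, n)) (i j : nat) : (n <= j)%N -> mxe d A i j = d.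
Proof. by move=> h; rewrite /mxe; case: insubP => //= *; rewrite insubN // -leqNgt. Qed.

Lemma sunfold_smode I (a : st) n (Q : 'M[C]_(I n)) :
  sunfold I (smode a n Q) n = Q *m sunfold I a n.
Proof.
apply/matrixP => i j; rewrite !mxE; apply: eq_bigr => t _.
rewrite !mxE mulrC /dec eqxx mxeE; congr (_ * _); congr a.
by apply: functional_extensionality => k; rewrite /upd /dec; case: eqP.
Qed.

Lemma sunfoldB I (a b : st) n :
  sunfold I (fun r => a r - b r) n = sunfold I a n - sunfold I b n.
Proof. by apply/matrixP => i j; rewrite !mxE. Qed.

Lemma smodeB (a b : st) n J K (Q : 'M[C]_(J, K)) :
  smode (fun r => a r - b r) n Q = (fun r => smode a n Q r - smode b n Q r).
Proof.
apply: functional_extensionality => r; rewrite /smode -sumrB.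
by apply: eq_bigr => t _; rewrite mulrBl.
Qed.

Lemma upd_upd r n t u : upd (upd r n t) n u = upd r n u.
Proof. by apply: functional_extensionality => k; rewrite /upd; case: eqP. Qed.

Lemma upd_comm r m n t u : m != n -> upd (upd r n t) m u = upd (upd r m u) n t.
Proof.
move=> h; apply: functional_extensionality => k; rewrite /upd.
case: (eqVneq k m) => [->|//]; by rewrite (negbTE h).
Qed.

Lemma smode_comm (a : st) m n J K J' K' (Q : 'M[C]_(J, K)) (R : 'M[C]_(J', K')) :
  m != n -> smode (smode a m Q) n R = smode (smode a n R) m Q.
Proof.
move=> hmn; apply: functional_extensionality => r; rewrite /smode.
under eq_bigr do rewrite mulr_suml.
rewrite exchange_big /=; apply: eq_bigr => u _; rewrite mulr_suml.
apply: eq_bigr => t _.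
have e1 : upd r n t m = r m by rewrite /upd (negbTE hmn).
have e2 : upd r m u n = r n by rewrite /upd eq_sym (negbTE hmn).
rewrite upd_comm // e1 e2.
ring.
Qed.

Lemma smode_smode (a : st) n J K J' (Q : 'M[C]_(J, K)) (R : 'M[C]_(J', J)) :
  smode (smode a n Q) n R = smode a n (R *m Q).
Proof.
apply: functional_extensionality => r; rewrite /smode.
under eq_bigr do rewrite mulr_suml.
rewrite exchange_big /=; apply: eq_bigr => u _.
case: (ltnP (r n) J') => hr.
  rewrite (mxeE 0 (R *m Q) (Ordinal hr) u) mxE mulr_sumr.
  apply: eq_bigr => t _; rewrite upd_upd {2}/upd eqxx !mxeE (mxeE 0 R (Ordinal hr) t); ring.
rewrite (mxe_out 0 (R *m Q)) // mulr0 big1 // => t _.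
by rewrite (mxe_out 0 R) // mulr0.
Qed.

Lemma smode0 (a : st) n J K : smode a n (0 : 'M[C]_(J, K)) = fun _ => 0.
Proof.
apply: functional_extensionality => r; rewrite /smode big1 // => t _.
case: (ltnP (r n) J) => hr; last by rewrite mxe_out // mulr0.
by rewrite (mxeE 0 _ (Ordinal hr) t) mxE mulr0.
Qed.

End Snorm.

Section Fold.
Variable N : nat.
Variable T : Type.
Variables F G H : 'I_N -> T -> T.

Lemma push x l b : x \notin l -> (forall m, m \in l -> forall b, F x (G m b) = G m (F x b)) ->
  F x (foldl (fun b n => G n b) b l) = foldl (fun b n => G n b) (F x b) l.
Proof.
elim: l b => [|y l IH] b //= hx hc.
rewrite in_cons negb_or in hx; case/andP: hx => hxy hxl.
rewrite IH //; first by rewrite hc // mem_head.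
by move=> m hm; apply: hc; rewrite in_cons hm orbT.
Qed.

Lemma foldl_merge l a : uniq l ->
  (forall m n, m != n -> forall b, F m (G n b) = G n (F m b)) ->
  (forall n b, F n (G n b) = H n b) ->
  foldl (fun b n => F n b) (foldl (fun b n => G n b) a l) l = foldl (fun b n => H n b) a l.
Proof.
elim: l a => [|x l IH] a //= /andP [hx hu] hc hh.
rewrite push //; last by move=> m hm b; apply: hc; apply: contra hx => /eqP ->.
by rewrite hh IH.
Qed.

End Fold.

Lemma foldl_last N T (G : 'I_N -> T -> T) l a x : uniq l -> x \in l ->
  (forall m, m != x -> forall b, G x (G m b) = G m (G x b)) ->
  exists b, foldl (fun b n => G n b) a l = G x b.
Proof.
elim: l a => [|y l IH] a //= /andP [hy hu] hxl hc.
rewrite in_cons in hxl; case: (eqVneq x y) => [exy | nxy].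
  subst y; exists (foldl (fun b n => G n b) a l).
  apply: esym; apply: (@push N T G G x l a) => //.
  by move=> m hm b; apply: hc; apply: contra hy => /eqP <-.
by rewrite (negbTE nxy) /= in hxl; apply: IH.
Qed.

Section Slices.
Variable C : numClosedFieldType.
Variable p : nat.
Variable M : 'M[C]_p.
Hypothesis hM : M \in unitmx.
Local Notation tube := (tube C p).

Lemma Lap_Linv b : Lap M (Linv M b) = b.
Proof. by rewrite /Lap /Linv mulmxKV. Qed.

Lemma Lap0 : Lap M 0 = 0.
Proof. by rewrite /Lap mul0mx. Qed.

Lemma mxE0 m n (i : 'I_m) (j : 'I_n) : (0 : 'M[C]_(m, n)) i j = 0.
Proof. by rewrite mxE. Qed.

Lemma Lap_sum (T : Type) (s : seq T) (f : T -> tube) k :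
  Lap M (\sum_(t <- s) f t) 0 k = \sum_(t <- s) Lap M (f t) 0 k.
Proof. by rewrite /Lap mulmx_suml summxE. Qed.

Lemma LapB a b k : Lap M (a - b) 0 k = Lap M a 0 k - Lap M b 0 k.
Proof. rewrite /Lap !mxE -sumrB; apply: eq_bigr => j _; by rewrite !mxE mulrBl. Qed.

Lemma Lap_tsmul a b k : Lap M (tsmul M a b) 0 k = Lap M a 0 k * Lap M b 0 k.
Proof. by rewrite /tsmul Lap_Linv mxE. Qed.

Lemma sliceE m n (U : 'M[tube]_(m, n)) k i j : slice M U k i j = Lap M (U i j) 0 k.
Proof. exact: mxE. Qed.

Lemma Lap_mxe J K (U : 'M[tube]_(J, K)) (i t : nat) k :
  Lap M (mxe 0 U i t) 0 k = mxe 0 (slice M U k) i t.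
Proof.
case: (ltnP i J) => hi; last by rewrite !mxe_out // Lap0 mxE0.
case: (ltnP t K) => ht; last by rewrite !mxe_out2 // Lap0 mxE0.
by rewrite (mxeE _ U (Ordinal hi) (Ordinal ht)) (mxeE 0 (slice M U k) (Ordinal hi) (Ordinal ht)) sliceE.
Qed.

Variable N : nat.

Definition sl (X : tensor C p N) (k : 'I_p) : ('I_N -> nat) -> C :=
  fun r => Lap M (X r) 0 k.

Lemma sl_tmode X n J K (U : 'M[tube]_(J, K)) k :
  sl (tmode M X n U) k = smode (sl X k) n (slice M U k).
Proof.
apply: functional_extensionality => r; rewrite /sl /tmode Lap_sum.
by apply: eq_bigr => t _; rewrite Lap_tsmul Lap_mxe.
Qed.

Lemma sl_foldl (a b : 'I_N -> nat) (U : forall n : 'I_N, 'M[tube]_(a n, b n)) l X k :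
  sl (foldl (fun X n => tmode M X n (U n)) X l) k =
  foldl (fun v n => smode v n (slice M (U n) k)) (sl X k) l.
Proof. by elim: l X => [|x l IH] X //=; rewrite IH sl_tmode. Qed.

Lemma sl_tmodes (a b : 'I_N -> nat) (U : forall n : 'I_N, 'M[tube]_(a n, b n)) X k :
  sl (tmodes M X U) k =
  foldl (fun v n => smode v n (slice M (U n) k)) (sl X k) (enum 'I_N).
Proof. exact: sl_foldl. Qed.

Lemma slB (X Y : tensor C p N) k : sl (fun x => X x - Y x) k = (fun r => sl X k r - sl Y k r).
Proof. by apply: functional_extensionality => r; rewrite /sl LapB. Qed.

Lemma slice_tH m n (U : 'M[tube]_(m, n)) k : slice M (tH M U) k = mxH (slice M U k).
Proof.
apply/matrixP => i j; rewrite sliceE [tH M U i j]mxE Lap_Linv mxE mxHE.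
by rewrite sliceE.
Qed.

Lemma slice_tmul m n r (A : 'M[tube]_(m, n)) (B : 'M[tube]_(n, r)) k :
  slice M (tmul M A B) k = slice M A k *m slice M B k.
Proof.
apply/matrixP => i j; rewrite sliceE [tmul M A B i j]mxE Lap_sum [RHS]mxE.
by apply: eq_bigr => t _; rewrite Lap_tsmul !sliceE.
Qed.

Lemma slice_tI n k : slice M (tI M n) k = 1%:M.
Proof.
apply/matrixP => i j; rewrite sliceE [tI M n i j]mxE [RHS]mxE; case: eqP => _.
  by rewrite Lap_Linv mxE.
by rewrite Lap0 mxE.
Qed.

Lemma slice_unfold I (A : tensor C p N) n k :
  slice M (unfold I A n) k = sunfold I (sl A k) n.
Proof. by apply/matrixP => i j; rewrite sliceE [unfold I A n i j]mxE [RHS]mxE. Qed.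

Lemma slice_firstcols m K (U : 'M[tube]_m) k : (K <= m)%N ->
  slice M (firstcols K U) k = slice M U k *m Emx C m K.
Proof.
move=> hK; apply/matrixP => i j; rewrite sliceE [firstcols K U i j]mxE Lap_mxe [RHS]mxE.
have hj : (j < m)%N by apply: leq_trans (ltn_ord j) hK.
rewrite (mxeE _ _ i (Ordinal hj)) (bigD1 (Ordinal hj)) //= big1 ?addr0.
  by rewrite [Emx _ _ _ _ _]mxE eqxx mulr1.
move=> t ht; rewrite [Emx _ _ _ _ _]mxE.
have -> : ((t : nat) == j) = false.
  by apply/negbTE; apply: contra ht => /eqP h; apply/eqP/val_inj.
by rewrite mulr0.
Qed.

End Slices.

Section Norms.
Variable C : numClosedFieldType.
Variable p : nat.
Variable c : C.
Variable W : 'M[C]_p.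
Hypothesis hc : c != 0.
Hypothesis hW : unitary_mx W.
Local Notation M := (c *: W).

Lemma rowsq (v : 'rV[C]_p) : \sum_k `|v 0 k| ^+ 2 = (v *m mxH v) 0 0.
Proof. by rewrite [RHS]mxE; apply: eq_bigr => k _; rewrite mxHE normCK. Qed.

Lemma mxHZ m n (a : C) (A : 'M[C]_(m, n)) : mxH (a *: A) = a^* *: mxH A.
Proof. by apply/matrixP => i j; rewrite !mxE rmorphM. Qed.

Lemma rn (b : tube C p) : \sum_k `|Lap M b 0 k| ^+ 2 = `|c| ^+ 2 * \sum_k `|b 0 k| ^+ 2.
Proof.
rewrite !rowsq /Lap -scalemxAr mxHZ -scalemxAl -scalemxAr scalerA.
rewrite mxH_mul mulmxA -(mulmxA b W); case: hW => -> _; rewrite mulmx1.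
by rewrite [LHS]mxE normCK.
Qed.

Lemma c2_neq0 : `|c| ^+ 2 != 0.
Proof. by rewrite expf_neq0 // normr_eq0. Qed.

Lemma rn' (b : tube C p) : \sum_k `|b 0 k| ^+ 2 = (`|c| ^+ 2)^-1 * \sum_k `|Lap M b 0 k| ^+ 2.
Proof. by rewrite rn mulKf // c2_neq0. Qed.

Variable N : nat.

Lemma tnormE I (X : tensor C p N) :
  tnorm I X = sqrtC ((`|c| ^+ 2)^-1 * \sum_k snorm2 I (sl M X k)).
Proof.
rewrite /tnorm; congr sqrtC; rewrite /snorm2 [X in _ * X]exchange_big mulr_sumr /=.
apply: eq_bigr => x _; rewrite rn' mulr_sumr; apply: eq_bigr => k _.
by [].
Qed.

Lemma tsigma2 m n (Sg : 'M[tube C p]_(m, n)) i :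
  tsigma Sg i ^+ 2 = (`|c| ^+ 2)^-1 * \sum_k `|mxe 0 (slice M Sg k) i i| ^+ 2.
Proof.
rewrite /tsigma /tsnorm sqrtCK rn'; congr (_ * _); apply: eq_bigr => k _.
by rewrite Lap_mxe.
Qed.
End Norms.

Section Diag.
Variable C : numClosedFieldType.

Lemma dS_mxe m n (S : 'M[C]_(m, n)) i : sdiag S -> dS S i = `|mxe 0 S i i| ^+ 2.
Proof.
move=> hS; rewrite /dS; case: (ltnP i n) => hi.
  rewrite (bigD1 (Ordinal hi)) //= big1 ?addr0.
    by rewrite (mxeE 0 S i (Ordinal hi)).
  move=> j hj; rewrite hS ?normr0 ?expr0n //.
  by apply: contra hj => /eqP h; apply/eqP/val_inj.
rewrite mxe_out2 // normr0 expr0n /= big1 // => j _.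
rewrite hS ?normr0 ?expr0n // neq_ltn (leq_trans (ltn_ord j) hi) orbT //.
Qed.

Lemma svd_sdiag m n (S : 'M[C]_(m, n)) : svd_diag S -> sdiag S.
Proof. by case. Qed.

Lemma mxe_min T (d : T) m n (S : 'M[T]_(m, n)) (i : nat) : (minn m n <= i)%N -> mxe d S i i = d.
Proof.
move=> h; case: (leqP m i) => hm; first by rewrite mxe_out.
by rewrite mxe_out2 //; lia.
Qed.

Lemma svd_dmono m n (S : 'M[C]_(m, n)) : svd_diag S -> dmono S.
Proof.
move=> hS i j hij; have hd := svd_sdiag hS.
rewrite !dS_mxe //; case: (ltnP j (minn m n)) => hj.
  case: hS => _ [h0 h1].
  have hj0 := h0 _ hj; have hi0 : 0 <= mxe 0 S i i by apply: h0; apply: leq_ltn_trans hij hj.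
  have hle := h1 _ _ hij hj.
  rewrite !ger0_norm // !expr2; apply: ler_pM => //.
rewrite mxe_min // normr0 expr0n /=; exact: exprn_ge0.
Qed.
End Diag.

Section Prefix.
Variable C : numClosedFieldType.
Variable p : nat.
Variable M : 'M[C]_p.
Hypothesis hM : M \in unitmx.

Lemma Lap_eq0 (b : tube C p) : Lap M b = 0 -> b = 0.
Proof. by move=> h; rewrite -(mulmxK hM b) -/(Lap M b) h mul0mx. Qed.

Lemma trank_zero m n (Sg : 'M[tube C p]_(m, n)) (i : nat) :
  (forall k, svd_diag (slice M Sg k)) -> (trank Sg <= i)%N -> mxe 0 Sg i i = 0.
Proof.
move=> hS hi; apply/eqP/negPn/negP => hT.
have him : (i < minn m n)%N.
  by rewrite ltnNge; apply: contra hT => h; rewrite mxe_min.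
have [k hk] : exists k, Lap M (mxe 0 Sg i i) 0 k != 0.
  apply/existsP; apply: contraR hT; rewrite negb_exists => /forallP h.
  apply/eqP/Lap_eq0; apply/rowP => k; rewrite mxE0.
  by have := h k; rewrite negbK => /eqP.
rewrite Lap_mxe // in hk.
have hall : forall j, (j <= i)%N -> mxe 0 Sg j j != 0.
  move=> j hj; apply: contraTneq isT => hz.
  have := hS k; case=> _ [h0 h1].
  have := h1 _ _ hj him; have := h0 _ him.
  rewrite -[mxe 0 (slice M Sg k) j j]Lap_mxe hz Lap0 mxE0 => g0 g1.
  have : mxe 0 (slice M Sg k) i i = 0 by apply/eqP; rewrite eq_le g1 g0.
  by move/eqP; rewrite (negbTE hk).
have : (i.+1 <= trank Sg)%N.
  rewrite /trank; apply: leq_trans (_ : (\sum_(j < minn m n) ((j < i.+1)%N : nat) <= _)%N).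
    by rewrite count_lt; lia.
  by apply: leq_sum => j _; case: ltnP => //= hj; rewrite hall.
lia.
Qed.
End Prefix.

Section Conv.
Variable C : numClosedFieldType.

Lemma sum_conv (m r R : nat) (e : nat -> C) : (R <= m)%N -> (forall i, (R <= i)%N -> e i = 0) ->
  \sum_(i < m) (r <= i)%N%:R * e i = \sum_(r <= i < R) e i.
Proof.
move=> hRm he.
have -> : \sum_(i < m) (r <= i)%N%:R * e i = \sum_(0 <= i < m) ((r <= i) && (i < R))%N%:R * e i.
  rewrite big_mkord; apply: eq_bigr => i _; case: (ltnP i R) => h; first by rewrite andbT.
  by rewrite he // !mulr0.
case: (leqP r R) => hr.
  have e1 : \sum_(r <= i < R) e i = \sum_(0 <= i < R | true && (r <= i)%N) e i
    := big_nat_widenl _ _ _ _ _ (leq0n r).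
  have e2 : \sum_(0 <= i < R | true && (r <= i)%N) e i
      = \sum_(0 <= i < m | (true && (r <= i)%N) && (i < R)%N) e i
    := big_nat_widen _ _ _ _ _ hRm.
  rewrite e1 e2 [RHS]big_mkcond /=.
  by apply: eq_bigr => i _; case: ifP => _; rewrite ?mul1r ?mul0r.
rewrite [RHS]big_geq ?(ltnW hr) //; apply: big1 => i _.
case: (leqP r i) => h1 /=; last by rewrite mul0r.
by rewrite ltnNge (leq_trans (ltnW hr) h1) /= mul0r.
Qed.
End Conv.

Section Core.
Variable C : numClosedFieldType.
Variable N : nat.
Variable I : 'I_N -> nat.
Hypothesis Ipos : forall k, (0 < I k)%N.
Local Notation st := (('I_N -> nat) -> C).

Lemma sunfold0 n : sunfold I (fun _ : 'I_N -> nat => (0 : C)) n = 0.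
Proof. by apply/matrixP => i j; rewrite !mxE. Qed.

Lemma core_trunc (a : st) (P : forall n : 'I_N, 'M[C]_(I n)) l :
  (forall n, herm_idem (P n)) ->
  snorm2 I (fun r => a r - foldl (fun v n => smode v n (P n)) a l r) <=
  \sum_(n <- l) mF ((1%:M - P n) *m sunfold I a n).
Proof.
move=> hP; elim/last_ind: l => [|l x IH].
  rewrite big_nil /snorm2 big1 // => y _; by rewrite subrr normr0 expr0n.
rewrite foldl_rcons -cats1 big_cat big_seq1 /=.
set b := foldl _ a l.
rewrite (snorm2_unfold Ipos _ x) sunfoldB sunfold_smode.
have -> : sunfold I a x - P x *m sunfold I b x =
   (1%:M - P x) *m sunfold I a x + P x *m (sunfold I a x - sunfold I b x).
  by rewrite mulmxBr mulmxBl mul1mx addrA subrK.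
rewrite mF_orth // addrC; apply: lerD => //.
apply: le_trans (mF_proj_le _ (hP x)) _.
by rewrite -sunfoldB -snorm2_unfold.
Qed.

Lemma core_lower (a b b' : st) n (Y : 'M[C]_(I n, I n)) r (Yr : 'M[C]_(I n, r)) :
  Y = Yr *m mxH Yr -> mxH Yr *m Yr = 1%:M ->
  b = smode b' n Yr ->
  mF ((1%:M - Y) *m sunfold I a n) <= snorm2 I (fun x => a x - b x).
Proof.
move=> hY hYr hb.
have hP : herm_idem Y by rewrite hY; exact: proj_of.
rewrite (snorm2_unfold Ipos _ n) sunfoldB [X in _ <= X](mF_split _ hP).
have -> : (1%:M - Y) *m (sunfold I a n - sunfold I b n) = (1%:M - Y) *m sunfold I a n.
  rewrite mulmxBr -[(1%:M - Y) *m sunfold I b n]sunfold_smode hb smode_smode hY proj_kill // smode0 sunfold0.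
  by rewrite subr0.
by rewrite lerDl mF_ge0.
Qed.
End Core.

Unset Implicit Arguments.

Lemma trank_le (C : numClosedFieldType) p m n (Sg : 'M[tube C p]_(m, n)) : (trank Sg <= minn m n)%N.
Proof.
rewrite /trank; apply: (@leq_trans (\sum_(i < minn m n) 1)%N).
  by apply: leq_sum => i _; exact: leq_b1.
by rewrite sum1_card card_ord.
Qed.

Theorem theorem5p4 (C : numClosedFieldType) (p N : nat) (hp : (0 < p)%N)
  (c : C) (W : 'M[C]_p) (hc : c != 0) (hW : unitary_mx W)
  (I I' : 'I_N -> nat) (hI' : forall n, (1 <= I' n <= I n)%N)
  (A : tensor C p N)
  (U : forall n : 'I_N, 'M[tube C p]_(I n))
  (Sg : forall n : 'I_N, 'M[tube C p]_(I n, ucols I n))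
  (V : forall n : 'I_N, 'M[tube C p]_(ucols I n))
  (hsvd : forall n : 'I_N, is_tSVD (c *: W) (unfold I A n) (U n) (Sg n) (V n)) :
  let M := c *: W in
  let Ubar := fun n : 'I_N => firstcols (I' n) (U n) in
  let St := tmodes M A (fun n => tH M (Ubar n)) in
  let Ahat := tmodes M St Ubar in
  let bound := sqrtC (\sum_(n < N) \sum_(I' n <= i < trank (Sg n)) tsigma (Sg n) i ^+ 2) in
  tnorm I (fun x => A x - Ahat x) <= bound /\
  forall (S : tensor C p N) (Wn : forall n : 'I_N, 'M[tube C p]_(I n, I' n)),
    (forall n, tmul M (tH M (Wn n)) (Wn n) = tI M (I' n)) ->
    bound <= sqrtC N%:R * tnorm I (fun x => A x - tmodes M S Wn x).
Proof.
move=> M Ubar St Ahat bound.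
have hM : M \in unitmx.
  rewrite /M unitmxZ ?unitfE //; case: hW => h _.
  by case: (mulmx1_unit h).
have Ipos : forall k, (0 < I k)%N by move=> k; have := hI' k; lia.
have hIle : forall n, (I' n <= I n)%N by move=> k; have := hI' k; lia.
pose c2 := `|c| ^+ 2.
have c2ge : 0 <= c2^-1 by rewrite invr_ge0 exprn_ge0.
pose a k := sl M A k.
pose e n k i := `|mxe 0 (slice M (Sg n) k) i i| ^+ 2.
pose T n k := \sum_(I' n <= i < trank (Sg n)) e n k i.
have hbound : bound = sqrtC (c2^-1 * \sum_k \sum_(n < N) T n k).
  rewrite /bound; congr sqrtC.
  rewrite exchange_big mulr_sumr; apply: eq_bigr => n _.
  rewrite /T exchange_big mulr_sumr; apply: eq_bigr => i _.
  by rewrite (tsigma2 hc hW).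
have hT : forall n k, \sum_(i < I n) (I' n <= i)%N%:R * dS (slice M (Sg n) k) i = T n k.
  move=> n k; have [_ [_ [hS _]]] := hsvd n k.
  under eq_bigr do rewrite (dS_mxe _ (svd_sdiag hS)).
  rewrite (@sum_conv C (I n) (I' n) (trank (Sg n)) (e n k)) //.
    by have := @trank_le C p _ _ (Sg n); lia.
  move=> i hi; rewrite /e -Lap_mxe // (trank_zero hM) // ?Lap0 ?mxE0 ?normr0 ?expr0n //.
  by move=> k'; have [_ [_ [hS' _]]] := hsvd n k'.
have hA : forall n k, sunfold I (sl M A k) n =
    slice M (U n) k *m slice M (Sg n) k *m mxH (slice M (V n) k).
  by move=> n k; have [_ [_ [_ h]]] := hsvd n k; rewrite -slice_unfold.
have snorm2_ge0 : forall (f : ('I_N -> nat) -> C), 0 <= snorm2 I f.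
  by move=> f; apply: sumr_ge0 => x _; apply: exprn_ge0.
have T_ge0 : forall n k, 0 <= T n k.
  by move=> n k; apply: sumr_ge0 => i _; apply: exprn_ge0.
split.
  rewrite (tnormE hc hW) hbound ler_sqrtC; first last.
  - by rewrite nnegrE; apply: mulr_ge0 => //; apply: sumr_ge0 => k _; apply: sumr_ge0.
  - by rewrite nnegrE; apply: mulr_ge0 => //; apply: sumr_ge0 => k _.
  apply: (ler_wpM2l c2ge); apply: ler_sum => k _.
  rewrite slB /Ahat /St !(sl_tmodes hM).
  pose Y n := slice M (U n) k *m Emx C (I n) (I' n).
  have eY : forall n, slice M (Ubar n) k = Y n by move=> n; rewrite slice_firstcols.
  have e1 : (fun v n => smode v n (slice M (Ubar n) k)) = (fun v n => smode v n (Y n)).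
    by apply: functional_extensionality => v; apply: functional_extensionality => n; rewrite eY.
  have e2 : (fun v n => smode v n (slice M (tH M (Ubar n)) k)) = (fun v n => smode v n (mxH (Y n))).
    by apply: functional_extensionality => v; apply: functional_extensionality => n; rewrite (slice_tH hM) eY.
  rewrite e1 e2 (foldl_merge (H := fun n v => smode v n (Y n *m mxH (Y n)))); first last.
  - by move=> n v; rewrite smode_smode.
  - by move=> m n hmn v; rewrite smode_comm // eq_sym.
  - exact: enum_uniq.
  apply: le_trans (core_trunc Ipos (sl M A k) (enum 'I_N) _) _.
    move=> n; apply: proj_of; rewrite /Y mxH_mul mulmxA -(mulmxA _ (mxH _)).
    have [[_ hU] _] := hsvd n k; rewrite hU mulmx1 EmxHE //.
  rewrite enumT; apply: ler_sum => n _; rewrite hA /Y R2 ?hT //.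
  - by have [hU _] := hsvd n k.
  - by have [_ [hV _]] := hsvd n k.
  - by have [_ [_ [hS _]]] := hsvd n k; apply: svd_sdiag.
move=> S Wn hWn.
rewrite (tnormE hc hW) hbound -sqrtCM; first last.
- by rewrite nnegrE; apply: mulr_ge0 => //; apply: sumr_ge0 => k _.
- by rewrite nnegrE ler0n.
rewrite ler_sqrtC; first last.
- by rewrite nnegrE; apply: mulr_ge0; [exact: ler0n | apply: mulr_ge0 => //; apply: sumr_ge0 => k _].
- by rewrite nnegrE; apply: mulr_ge0 => //; apply: sumr_ge0 => k _; apply: sumr_ge0.
rewrite [X in _ <= X]mulrCA; apply: (ler_wpM2l c2ge); rewrite mulr_sumr; apply: ler_sum => k _.
rewrite mulr_natl -[in X in _ *+ X](card_ord N) -sumr_const; apply: ler_sum => n _.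
rewrite -hT slB (sl_tmodes hM).
pose Yr := slice M (Wn n) k.
have hYr : mxH Yr *m Yr = 1%:M.
  by rewrite /Yr -(slice_tH hM) -(slice_tmul hM) hWn (slice_tI hM).
have [b' hb'] := @foldl_last N _ (fun m v => smode v m (slice M (Wn m) k)) (enum 'I_N) (sl M S k) n
   (enum_uniq _) (mem_enum _ _) (fun m hm v => smode_comm _ _ _ hm).
have [hU [hV [hSd _]]] := hsvd n k.
apply: le_trans (R1 hU hV (svd_sdiag hSd) (svd_dmono hSd) (hI' n) hYr) _.
rewrite -hA.
exact: (@core_lower C N I Ipos (sl M A k) _ b' n _ _ Yr (erefl _) hYr hb').
Qed.
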